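(* Let $S$ be an anti-rectangular AG-groupoid. The following are equivalent: (i) $S$ is fully idempotent, i.e. $I^{2}=I$ for every ideal $I$ of $S$; (ii) $A\cap B=AB$ for all ideals $A,B$ of $S$; (iii) the set $L_S$ of ideals of $S$, with the operation $A\wedge B=AB$, is a semilattice (i.e. $\wedge$ is a well-defined operation on $L_S$ which is commutative, associative and idempotent).
   Context: An AG-groupoid is a set $S$ with a binary operation satisfying $(ab)c=(cb)a$ for all $a,b,c\in S$. It is anti-rectangular if $a=(ba)b$ for all $a,b\in S$. For nonempty subsets, $AB=\{ab:a\in A,b\in B\}$, $I^{2}=II$. An ideal of $S$ is a nonempty subset $I$ with $SI\subseteq I$ and $IS\subseteq I$. *)

(* Defs.v *)
Set Implicit Arguments.

Section AG.
Variable S : Type.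
Variable op : S -> S -> S.

Definition AG_groupoid : Prop := forall a b c, op (op a b) c = op (op c b) a.
Definition anti_rectangular : Prop := forall a b, a = op (op b a) b.

Definition subset (A B : S -> Prop) : Prop := forall x, A x -> B x.
Definition seteq (A B : S -> Prop) : Prop := forall x, A x <-> B x.
Definition inter (A B : S -> Prop) : S -> Prop := fun x => A x /\ B x.
Definition setT : S -> Prop := fun _ => True.
Definition setmul (A B : S -> Prop) : S -> Prop :=
  fun x => exists a b, A a /\ B b /\ x = op a b.

Definition is_ideal (I : S -> Prop) : Prop :=
  (exists x, I x) /\ subset (setmul setT I) I /\ subset (setmul I setT) I.

Definition fully_idempotent : Prop :=
  forall I, is_ideal I -> seteq (setmul I I) I.

Definition inter_eq_prod : Prop :=
  forall A B, is_ideal A -> is_ideal B -> seteq (inter A B) (setmul A B).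

Definition ideals_semilattice : Prop :=
  (forall A B, is_ideal A -> is_ideal B -> is_ideal (setmul A B)) /\
  (forall A B, is_ideal A -> is_ideal B -> seteq (setmul A B) (setmul B A)) /\
  (forall A B C, is_ideal A -> is_ideal B -> is_ideal C ->
     seteq (setmul (setmul A B) C) (setmul A (setmul B C))) /\
  (forall A, is_ideal A -> seteq (setmul A A) A).
End AG.

(* Main.v *)
Require Import Defs.

Lemma ii_holds (S : Type) (op : S -> S -> S)
  (hAR : anti_rectangular op) : inter_eq_prod op.
Proof.
  intros A B [_ [HA1 HA2]] [_ [HB1 HB2]] x; split.
  - intros [Ha Hb]. exists (op x x), x. split; [|split].
    + apply HA2. exists x, x. unfold setT. auto.
    + exact Hb.
    + apply hAR.
  - intros [a [b [Ha [Hb ->]]]]. split.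
    + apply HA2. exists a, b. unfold setT. auto.
    + apply HB1. exists a, b. unfold setT. auto.
Qed.

Lemma i_holds (S : Type) (op : S -> S -> S)
  (hAR : anti_rectangular op) : fully_idempotent op.
Proof.
  intros I HI x. pose proof (@ii_holds S op hAR _ _ HI HI x) as H.
  unfold inter in H. split.
  - intro Hx. apply H in Hx. tauto.
  - intro Hx. apply H. tauto.
Qed.


Lemma iii_holds (S : Type) (op : S -> S -> S)
  (hAR : anti_rectangular op) : ideals_semilattice op.
Proof.
  assert (HI : forall A B, is_ideal op A -> is_ideal op B -> is_ideal op (setmul op A B)).
  { intros A B HA HB.
    pose proof (@ii_holds S op hAR _ _ HA HB) as E.
    destruct HA as [[a Ha] [HA1 HA2]]; destruct HB as [[b Hb] [HB1 HB2]].
    split; [|split].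
    - exists (op a b), a, b. auto.
    - intros x [s [y [_ [Hy ->]]]]. apply E. apply E in Hy. destruct Hy.
      split; [apply HA1 | apply HB1]; exists s, y; unfold setT; auto.
    - intros x [y [s [Hy [_ ->]]]]. apply E. apply E in Hy. destruct Hy.
      split; [apply HA2 | apply HB2]; exists y, s; unfold setT; auto. }
  split; [exact HI|split; [|split]].
  - intros A B HA HB x.
    pose proof (@ii_holds S op hAR _ _ HA HB x). pose proof (@ii_holds S op hAR _ _ HB HA x).
    unfold inter in *; tauto.
  - intros A B C HA HB HC x.
    pose proof (@ii_holds S op hAR _ _ (HI A B HA HB) HC x).
    pose proof (@ii_holds S op hAR _ _ HA (HI B C HB HC) x).
    pose proof (@ii_holds S op hAR _ _ HA HB x). pose proof (@ii_holds S op hAR _ _ HB HC x).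
    unfold inter in *; tauto.
  - intros A HA. exact (@i_holds S op hAR _ HA).
Qed.

Theorem proposition5 (S : Type) (op : S -> S -> S)
  (hAG : AG_groupoid op) (hAR : anti_rectangular op) :
  (fully_idempotent op <-> inter_eq_prod op) /\
  (inter_eq_prod op <-> ideals_semilattice op).
Proof.
  pose proof (@i_holds S op hAR). pose proof (@ii_holds S op hAR). pose proof (@iii_holds S op hAR).
  tauto.
Qed.
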